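(* Let $\Omega\subseteq\mathbb{R}^n$ be open and convex, let $f:\Omega\to\mathbb{R}$ be convex and differentiable with $\nabla f$ Lipschitz continuous with constant $L$ (extend $f$ by $+\infty$ outside $\Omega$), let $g:\mathbb{R}^n\to\mathbb{R}\cup\{+\infty\}$ be convex with closed sublevel sets, and let $h=f+g$ have compact sublevel sets and $h^\star=\inf_x h(x)<\infty$. Run the oracle-structured minimization method (described in the context) from $x^0\in\Omega$, with parameters satisfying $\mu_{\max}\tau_{\min}>2L/(1-\alpha)$. Then $h(x^k)\to h^\star$ as $k\to\infty$.
   Context: Oracle-structured minimization method (OSMM). Fixed parameters: memory $M\ge1$ (integer), $\alpha,\beta\in(0,1)$, $\tau_{\min}>0$, $0<\mu_{\min}\le\mu_{\max}$, $\gamma_{\rm dec}\in(0,1)$, $\gamma_{\rm inc}>1$, and an initial $\mu_0\in[\mu_{\min},\mu_{\max}]$. There is a constant $C$ and, for each $k$, a symmetric positive semidefinite matrix $H_k$ with $\|H_k\|_2\le C$ (otherwise arbitrary). For $k=0,1,2,\dots$: (1) $l_k(x)=\max_{i=\max\{0,k-M+1\},\dots,k}\big(f(x^i)+\nabla f(x^i)^T(x-x^i)\big)$; $\tau_k=\operatorname{Tr}(H_k)/n$; $\lambda_k=\mu_k(\tau_k+\tau_{\min})$. (2) $x^{k+1/2}=\operatorname*{argmin}_x\big(l_k(x)+g(x)+\tfrac12(x-x^k)^T(H_k+\lambda_kI)(x-x^k)\big)$, $v^k=x^{k+1/2}-x^k$. (3) With $\phi_k(t)=f(x^k+tv^k)+t\,g(x^{k+1/2})+(1-t)g(x^k)$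 for $t\in[0,1]$, let $t_k=\beta^j$ where $j$ is the smallest nonnegative integer with $\phi_k(t_k)\le h(x^k)-\frac{\alpha t_k}{2}(v^k)^T(H_k+\lambda_kI)v^k$; set $x^{k+1}=x^k+t_kv^k$. (4) $\mu_{k+1}=\max\{\gamma_{\rm dec}\mu_k,\mu_{\min}\}$ if $t_k=1$, and $\mu_{k+1}=\min\{\gamma_{\rm inc}\mu_k,\mu_{\max}\}$ if $t_k<1$. *)

(* Defs.v *)
From HB Require Import structures.
From mathcomp Require Import all_boot all_order all_algebra.
From mathcomp Require Import all_classical all_reals all_analysis.
Set Implicit Arguments. Unset Strict Implicit. Unset Printing Implicit Defensive.
Import Order.TTheory GRing.Theory Num.Theory.
Import numFieldNormedType.Exports.
Local Open Scope classical_set_scope.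
Local Open Scope ring_scope.

Section OSMMDefs.
Variables (R : realType) (n : nat).
Notation vec := 'cV[R]_n.

Definition dotv (x y : vec) : R := (x^T *m y) 0 0.
Definition enorm (x : vec) : R := Num.sqrt (dotv x x).
Definition quadf (A : 'M[R]_n) (v : vec) : R := (v^T *m A *m v) 0 0.

Definition convex_set_v (S : set vec) : Prop :=
  forall (x y : vec) (t : R), S x -> S y -> 0 <= t <= 1 -> S (t *: x + (1 - t) *: y).

Definition convex_on (S : set vec) (f : vec -> R) : Prop :=
  forall (x y : vec) (t : R), S x -> S y -> 0 <= t <= 1 ->
    f (t *: x + (1 - t) *: y) <= t * f x + (1 - t) * f y.

Definition convex_ext (g : vec -> \bar R) : Prop :=
  forall (x y : vec) (t : R), 0 <= t <= 1 ->
    (g (t *: x + (1 - t) *: y)%R <= t%:E * g x + (1 - t)%R%:E * g y)%E.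

Definition fext (Omega : set vec) (f : vec -> R) (x : vec) : \bar R :=
  if x \in Omega then (f x)%:E else +oo%E.

Definition hfun (Omega : set vec) (f : vec -> R) (g : vec -> \bar R) (x : vec) : \bar R :=
  (fext Omega f x + g x)%E.

(* the piecewise-affine model l_k built on the last M iterates (indices max(0,k-M+1)..k) *)
Definition affmod (f : vec -> R) (gf : vec -> vec) (xs : nat -> vec) (i : nat) (z : vec) : R :=
  f (xs i) + dotv (gf (xs i)) (z - xs i).

Definition lmodel (M : nat) (f : vec -> R) (gf : vec -> vec) (xs : nat -> vec) (k : nat) (z : vec) : R :=
  \big[Num.max/affmod f gf xs k z]_(k.+1 - M <= i < k.+1) affmod f gf xs i z.

Definition osmm_tau (Hk : 'M[R]_n) : R := \tr Hk / n%:R.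
Definition osmm_lambda (muk tau_min : R) (Hk : 'M[R]_n) : R := muk * (osmm_tau Hk + tau_min).
Definition osmm_mat (muk tau_min : R) (Hk : 'M[R]_n) : 'M[R]_n :=
  Hk + (osmm_lambda muk tau_min Hk)%:M.

Definition osmm_obj (M : nat) (f : vec -> R) (gf : vec -> vec) (g : vec -> \bar R)
  (xs : nat -> vec) (Ak : 'M[R]_n) (k : nat) (z : vec) : \bar R :=
  ((lmodel M f gf xs k z)%:E + g z + (1 / 2 * quadf Ak (z - xs k))%:E)%E.

Definition osmm_phi (Omega : set vec) (f : vec -> R) (g : vec -> \bar R)
  (xk xhk : vec) (s : R) : \bar R :=
  (fext Omega f (xk + s *: (xhk - xk)) + s%:E * g xhk + (1 - s)%R%:E * g xk)%E.

Definition osmm_accept (Omega : set vec) (f : vec -> R) (g : vec -> \bar R) (alpha : R)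
  (Ak : 'M[R]_n) (xk xhk : vec) (s : R) : Prop :=
  (osmm_phi Omega f g xk xhk s <=
     hfun Omega f g xk - (alpha * s / 2 * quadf Ak (xhk - xk))%:E)%E.

End OSMMDefs.

(* Main.v *)
Require Import Defs.
From HB Require Import structures.
From mathcomp Require Import all_boot all_order all_algebra.
From mathcomp Require Import all_classical all_reals all_analysis.
From mathcomp Require Import ring lra.
Set Implicit Arguments. Unset Strict Implicit.
Import Order.TTheory GRing.Theory Num.Theory.
Import numFieldNormedType.Exports.
Local Open Scope classical_set_scope.
Local Open Scope ring_scope.


Section LA.
Variables (R : realType) (n : nat).
Notation vec := 'cV[R]_n.

Lemma dotvE (u v : vec) : dotv u v = \sum_i u i 0 * v i 0.
Proof. by rewrite /dotv !mxE; apply: eq_bigr => i _; rewrite mxE. Qed.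

Lemma dot_lin (p q : R) (u v w : vec) :
  dotv (p *: u + q *: v) w = p * dotv u w + q * dotv v w.
Proof.
rewrite !dotvE !mulr_sumr -big_split; apply: eq_bigr => i _; rewrite /= !mxE; ring.
Qed.

Lemma dotC (u v : vec) : dotv u v = dotv v u.
Proof. by rewrite !dotvE; apply: eq_bigr => i _; rewrite mulrC. Qed.

Lemma dot_ge0 (u : vec) : 0 <= dotv u u.
Proof. by rewrite dotvE; apply: sumr_ge0 => i _; rewrite -expr2 sqr_ge0. Qed.

Lemma dot_quad (p q : R) (u v : vec) :
  dotv (p *: u + q *: v) (p *: u + q *: v) =
  p ^+ 2 * dotv u u + 2 * p * q * dotv u v + q ^+ 2 * dotv v v.
Proof.
rewrite !dotvE !mulr_sumr -!big_split; apply: eq_bigr => i _; rewrite /= !mxE; ring.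
Qed.

Lemma enorm_sq (u : vec) : enorm u ^+ 2 = dotv u u.
Proof. by rewrite /enorm sqr_sqrtr // dot_ge0. Qed.

Lemma enorm_ge0 (u : vec) : 0 <= enorm u.
Proof. exact: sqrtr_ge0. Qed.

Lemma cauchy_schwarz (u v : vec) : dotv u v <= enorm u * enorm v.
Proof.
set a := dotv u u; set b := dotv v v; set c := dotv u v.
have ha : 0 <= a by apply: dot_ge0.
have hb : 0 <= b by apply: dot_ge0.
have [c0|cpos] := lerP c 0.
  by apply: le_trans c0 _; apply: mulr_ge0; apply: enorm_ge0.
have key : c ^+ 2 <= a * b.
  have [b0|bpos] := eqVneq b 0.
    have := dot_ge0 (1 *: u + (- ((a + 1) / c)) *: v).
    rewrite dot_quad -/a -/b -/c b0 => h.
    have : (2 * 1 * - ((a + 1) / c) * c) = - 2 * (a + 1).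
      by field; rewrite gt_eqF.
    move=> e; rewrite e in h; lra.
  have hb' : 0 < b by rewrite lt_def bpos hb.
  have := dot_ge0 (b *: u + (- c) *: v).
  rewrite dot_quad -/a -/b -/c => h.
  have h2 : 0 <= b * (a * b - c ^+ 2) by nra.
  rewrite pmulr_rge0 // subr_ge0 in h2; by [].
have : c <= Num.sqrt (a * b).
  by rewrite -(ger0_norm (ltW cpos)) -sqrtr_sqr ler_sqrt // mulr_ge0.
by rewrite sqrtrM.
Qed.

Lemma dotZl (s : R) (u w : vec) : dotv (s *: u) w = s * dotv u w.
Proof. by rewrite !dotvE mulr_sumr; apply: eq_bigr => i _; rewrite !mxE mulrA. Qed.

Lemma dotZr (s : R) (u w : vec) : dotv w (s *: u) = s * dotv w u.
Proof. by rewrite dotC dotZl dotC. Qed.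

Lemma dotDl (u v w : vec) : dotv (u + v) w = dotv u w + dotv v w.
Proof. by rewrite !dotvE -big_split; apply: eq_bigr => i _; rewrite /= !mxE mulrDl. Qed.

Lemma dotNl (u w : vec) : dotv (- u) w = - dotv u w.
Proof. by rewrite -scaleN1r dotZl mulN1r. Qed.

Lemma dotBl (u v w : vec) : dotv (u - v) w = dotv u w - dotv v w.
Proof. by rewrite dotDl dotNl. Qed.

Lemma dotBr (u v w : vec) : dotv w (u - v) = dotv w u - dotv w v.
Proof. by rewrite dotC dotBl !(dotC w). Qed.

Lemma dot0l (w : vec) : dotv 0 w = 0.
Proof. by rewrite -(scale0r (0 : vec)) dotZl mul0r. Qed.

Lemma quadfE (A : 'M[R]_n) (w : vec) : quadf A w = dotv w (A *m w).
Proof. by rewrite /quadf /dotv mulmxA. Qed.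

Lemma quadfZ (A : 'M[R]_n) (s : R) (w : vec) : quadf A (s *: w) = s ^+ 2 * quadf A w.
Proof. by rewrite !quadfE -scalemxAr dotZl dotZr mulrA expr2. Qed.

Lemma quadf0 (A : 'M[R]_n) : quadf A 0 = 0.
Proof. by rewrite quadfE dot0l. Qed.

Lemma quadf_mat (Hm : 'M[R]_n) (l : R) (w : vec) :
  quadf (Hm + l%:M) w = quadf Hm w + l * dotv w w.
Proof. by rewrite !quadfE mulmxDl mul_scalar_mx dotC dotDl dotZl !(dotC w). Qed.

Lemma enormZ_le (s : R) (w : vec) : 0 <= s <= 1 -> enorm (s *: w) <= enorm w.
Proof.
move=> /andP[s0 s1]; rewrite /enorm ler_sqrt ?dot_ge0 // dotZl dotZr.
have := dot_ge0 w; set a := dotv w w => ha.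
have : s * s <= 1 by nra. nra.
Qed.

Lemma diag_quad (Hm : 'M[R]_n) (i : 'I_n) : quadf Hm (delta_mx i 0) = Hm i i.
Proof.
rewrite /quadf trmx_delta -rowE -colE !mxE. done.
Qed.

Lemma enorm_delta (i : 'I_n) : enorm (delta_mx i 0 : vec) = 1.
Proof.
rewrite /enorm /dotv trmx_delta mul_delta_mx mxE !eqxx /= sqrtr1 //.
Qed.

Lemma cs_mat (Hm : 'M[R]_n) (C : R) (w : vec) :
  (forall v, enorm (Hm *m v) <= C * enorm v) -> quadf Hm w <= C * dotv w w.
Proof.
move=> hC; rewrite quadfE; apply: le_trans (cauchy_schwarz _ _) _.
have := hC w; have := enorm_ge0 w; have := enorm_ge0 (Hm *m w).
rewrite -enorm_sq; nra.
Qed.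

End LA.

Section MV.
Variables (R : realType) (n : nat).
Notation vec := 'cV[R]_n.

Lemma seg_in (Omega : set vec) (x d : vec) (s : R) :
  convex_set_v Omega -> Omega x -> Omega (x + d) -> 0 <= s <= 1 ->
  Omega (x + s *: d).
Proof.
move=> hc hx hxd hs.
have -> : x + s *: d = s *: (x + d) + (1 - s) *: x.
  by rewrite scalerDr scalerBl scale1r [RHS]addrC addrA subrK.
exact: hc.
Qed.

Lemma mvt_f (Omega : set vec) (f : vec -> R) (gf : vec -> vec) (x d : vec) :
  convex_set_v Omega ->
  (forall z, Omega z -> differentiable f z) ->
  (forall z v, Omega z -> 'd f z v = dotv (gf z) v) ->
  Omega x -> Omega (x + d) ->
  exists2 c, 0 <= c <= 1 & f (x + d) - f x = dotv (gf (x + c *: d)) d.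
Proof.
move=> hc hd hg hx hxd.
pose phi := fun s : R => f (x + s *: d).
have qeq s : (fun h : R => h^-1 *: ((phi \o shift s) (h *: 1) - phi s)) =
    (fun h : R => h^-1 *: ((f \o shift (x + s *: d)) (h *: d) - f (x + s *: d))).
  apply: funext => h /=; rewrite /phi /shift /=.
  congr (_ *: (f _ - _)).
  rewrite [h *: 1]mulr1 scalerDl; rewrite addrC -addrA (addrC _ x) addrA. done.
have dphi s : 0 <= s <= 1 -> derivable phi s 1.
  move=> hs; rewrite /derivable qeq; apply: diff_derivable; apply: hd.
  exact: seg_in.
have Dphi s : 0 <= s <= 1 -> 'D_1 phi s = dotv (gf (x + s *: d)) d.
  move=> hs; rewrite /derive qeq -/(derive f (x + s *: d) d) deriveE.
    by apply: hg; exact: seg_in.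
  by apply: hd; exact: seg_in.
have cont : {within `[0, 1], continuous phi}.
  apply: derivable_within_continuous => s; rewrite in_itv /= => hs.
  exact: dphi.
have := @MVT_segment R phi (fun s => 'D_1 phi s) 0 1 ler01.
case.
- move=> s; rewrite in_itv /= => /andP[s0 s1]; apply: derivableP.
  by apply: dphi; rewrite !ltW.
- exact: cont.
move=> c; rewrite in_itv /= => hc01.
rewrite /phi scale1r scale0r addr0 subr0 mulr1 Dphi // => ->.
by exists c.
Qed.


Lemma dot_abs (u d : vec) : `|dotv u d| <= enorm u * enorm d.
Proof.
rewrite ler_norml cauchy_schwarz andbT.
have := cauchy_schwarz (- u) d; rewrite dotNl.
have -> : enorm (- u) = enorm u by rewrite /enorm dotNl dotC dotNl opprK.
by rewrite lerNl.
Qed.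

Lemma taylor_bd (Omega : set vec) (f : vec -> R) (gf : vec -> vec) (L1 : R) (x d : vec) :
  convex_set_v Omega ->
  (forall z, Omega z -> differentiable f z) ->
  (forall z v, Omega z -> 'd f z v = dotv (gf z) v) ->
  0 <= L1 ->
  (forall y z, Omega y -> Omega z -> enorm (gf y - gf z) <= L1 * enorm (y - z)) ->
  Omega x -> Omega (x + d) ->
  `|f (x + d) - f x - dotv (gf x) d| <= L1 * dotv d d.
Proof.
move=> hc hd hg hL1 hL hx hxd.
have [c hc01 ->] := mvt_f hc hd hg hx hxd.
rewrite -dotBl; apply: le_trans (dot_abs _ _) _.
have h1 : enorm (gf (x + c *: d) - gf x) <= L1 * enorm d.
  apply: le_trans (hL _ _ (seg_in hc hx hxd hc01) hx) _.
  rewrite addrC addKr; apply: ler_wpM2l => //; exact: enormZ_le.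
apply: le_trans (ler_wpM2r (enorm_ge0 _) h1) _.
by rewrite -mulrA -expr2 enorm_sq.
Qed.

Lemma eps_lemma (a b K : R) : (forall s, 0 < s <= 1 -> a <= b + s * K) -> a <= b.
Proof.
move=> h; apply/ler_addgt0Pr => e e0.
set K' := `|K| + 1.
have K'0 : 0 < K' by rewrite /K' ltr_pwDr // normr_ge0.
set s := Num.min 1 (e / K').
have s0 : 0 < s by rewrite /s lt_min ltr01 divr_gt0.
have s1 : s <= 1 by rewrite /s ge_min lexx.
have se : s <= e / K' by rewrite /s ge_min lexx orbT.
have := h s; rewrite s0 s1 => /(_ isT) hab.
apply: le_trans hab _; rewrite lerD2l.
have : s * K <= s * K'.
  apply: ler_wpM2l; first exact: ltW.
  rewrite /K'; apply: le_trans (ler_norm K) _; rewrite lerDl //.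
move=> h2; apply: le_trans h2 _.
by rewrite -(ler_pdivlMr _ _ K'0).
Qed.

Lemma grad_ineq (Omega : set vec) (f : vec -> R) (gf : vec -> vec) (L1 : R) (x z : vec) :
  convex_set_v Omega -> convex_on Omega f ->
  (forall z, Omega z -> differentiable f z) ->
  (forall z v, Omega z -> 'd f z v = dotv (gf z) v) ->
  0 <= L1 ->
  (forall y z, Omega y -> Omega z -> enorm (gf y - gf z) <= L1 * enorm (y - z)) ->
  Omega x -> Omega z ->
  f x + dotv (gf x) (z - x) <= f z.
Proof.
move=> hc hcf hd hg hL1 hL hx hz.
rewrite -lerBrDl; apply: (@eps_lemma _ _ (L1 * dotv (z - x) (z - x))) => s /andP[s0 s1].
have hxd : Omega (x + (z - x)) by rewrite addrC subrK.
have hs : 0 <= s <= 1 by rewrite (ltW s0) s1.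
have hxs := seg_in hc hx hxd hs.
have hxs' : Omega (x + s *: (z - x)) by [].
have := taylor_bd hc hd hg hL1 hL hx hxs'.
rewrite dotZl dotZr dotZr ler_norml => /andP[hlo _].
have hcv := hcf z x s hz hx hs.
have e : s *: z + (1 - s) *: x = x + s *: (z - x).
  by rewrite scalerBr scalerBl scale1r addrCA.
rewrite e in hcv.
set D := dotv (gf x) (z - x) in hlo *.
set Q := dotv (z - x) (z - x) in hlo *.
set fs := f (x + s *: (z - x)) in hlo hcv.
have hQ : 0 <= Q by apply: dot_ge0.
(* s*D - s^2 L1 Q <= fs - f x <= s (f z - f x) *)
have : s * D <= s * (f z - f x + s * (L1 * Q)) by nra.
by rewrite ler_pM2l.
Qed.

End MV.

Section DG.
Variables (R : realType) (n : nat).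
Notation vec := 'cV[R]_n.

Lemma p_cont (y0 d : vec) : continuous (fun s : R => y0 + s *: d).
Proof.
move=> s; have := @continuousD _ _ _ (fun _ : R => y0) (fun k : R => k *: d) s
  (@cst_continuous _ _ y0 s) (@scalel_continuous _ _ d s).
by [].
Qed.

Lemma fext_in (Omega : set vec) f z : Omega z -> fext Omega f z = (f z)%:E.
Proof. by move=> h; rewrite /fext mem_set. Qed.

Lemma fext_out (Omega : set vec) f z : ~ Omega z -> fext Omega f z = +oo%E.
Proof. by move=> h; rewrite /fext memNset. Qed.

Lemma hfun_out (Omega : set vec) f (g : vec -> \bar R) z :
  g z != -oo%E -> ~ Omega z -> hfun Omega f g z = +oo%E.
Proof. by move=> hg h; rewrite /hfun fext_out // addye. Qed.

Lemma dom_g (Omega : set vec) (f : vec -> R) (gf : vec -> vec) (L1 : R)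
  (g : vec -> \bar R) (y0 w : vec) :
  open Omega -> convex_set_v Omega ->
  (forall z, Omega z -> differentiable f z) ->
  (forall z v, Omega z -> 'd f z v = dotv (gf z) v) ->
  0 <= L1 ->
  (forall y z, Omega y -> Omega z -> enorm (gf y - gf z) <= L1 * enorm (y - z)) ->
  (forall z, g z != -oo%E) -> convex_ext g ->
  (forall a : R, closed [set z | (hfun Omega f g z <= a%:E)%E]) ->
  Omega y0 -> g y0 != +oo%E -> g w != +oo%E -> Omega w.
Proof.
move=> hop hc hd hg hL1 hL hgn hcg hcl hy0 gy0 gw.
have fy : g y0 \is a fin_num by rewrite fin_numE hgn gy0.
have fw : g w \is a fin_num by rewrite fin_numE hgn gw.
set d := w - y0.
pose p := fun s : R => y0 + s *: d.
set a := f y0 + `|dotv (gf y0) d| + L1 * dotv d d + `|fine (g y0)| + `|fine (g w)|.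
have equiv s : 0 <= s <= 1 -> Omega (p s) <-> (hfun Omega f g (p s) <= a%:E)%E.
  move=> hs; split; last first.
    move=> ha; apply/not_notP => hno.
    by move: ha; rewrite hfun_out.
  move=> hps; rewrite /hfun fext_in //.
  have hps' : Omega (y0 + s *: d) by [].
  have := taylor_bd hc hd hg hL1 hL hy0 hps'.
  rewrite dotZr dotZl dotZr ler_norml => /andP[_ hup].
  have hps2 : p s = s *: w + (1 - s) *: y0.
    by rewrite /p /d scalerBr scalerBl scale1r addrCA.
  have := hcg w y0 s hs; rewrite -hps2 -(fineK fy) -(fineK fw) -!EFinM -EFinD => hgp.
  rewrite /a.
  have hdd := dot_ge0 d.
  have e1 : s * dotv (gf y0) d <= `|dotv (gf y0) d|.
    apply: le_trans (ler_norm _) _; rewrite normrM ger0_norm ?(andP hs).1 //.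
    by rewrite ler_piMl ?normr_ge0 ?(andP hs).2.
  have e2 : s * (s * dotv d d) <= dotv d d.
    case/andP: hs => s0 s1.
    have ss : 0 <= 1 - s * s by nra.
    have := mulr_ge0 ss hdd; nra.
  have e3 : s * fine (g w) + (1 - s) * fine (g y0) <= `|fine (g y0)| + `|fine (g w)|.
    case/andP: hs => s0 s1.
    have := ler_norm (fine (g w)); have := ler_norm (fine (g y0)).
    have := normr_ge0 (fine (g w)); have := normr_ge0 (fine (g y0)).
    have := ler_norm (- fine (g w)); have := ler_norm (- fine (g y0)).
    rewrite !normrN; nra.
  have hf : f (p s) <= f y0 + `|dotv (gf y0) d| + L1 * dotv d d.
    have : L1 * (s * (s * dotv d d)) <= L1 * dotv d d by apply: ler_wpM2l.
    rewrite /p; lra.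
  apply: le_trans (leeD (lexx _) hgp) _.
  rewrite -EFinD lee_fin; lra.
have hA : connected [set` `[(0:R), 1]].
  apply/connected_intervalP; apply: interval_is_interval.
have e : ([set` `[(0:R), 1]] `&` (p @^-1` Omega)) = [set` `[(0:R), 1]].
  apply: hA.
- exists 0; split; first by rewrite /= in_itv /= lexx ler01.
  by rewrite /= /p scale0r addr0.
- exists (p @^-1` Omega) => //.
  apply: open_comp => //; move=> s _; exact: p_cont.
- exists (p @^-1` [set z | (hfun Omega f g z <= a%:E)%E]).
    apply: preimage_closed => //; move=> s _; exact: p_cont.
  apply/seteqP; split => s [hs1 hs2]; split => //;
    move: hs1; rewrite /= in_itv /= => hs; apply/(equiv s hs) => //.
have : ([set` `[(0:R), 1]] `&` (p @^-1` Omega)) 1 by rewrite e /= in_itv /= lexx ler01.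
by case=> _; rewrite /= /p scale1r /d addrC subrK.
Qed.

End DG.

Section CB.
Variables (R : realType) (n : nat).
Notation vec := 'cV[R]_n.

Lemma coord_le (z : vec) (i : 'I_n) : `|z i 0| <= `|z|.
Proof.
change (`|z i 0| <= mx_norm z); rewrite mx_normrE.
by rewrite (bigD1 (i, 0)) //= le_max lexx.
Qed.

Lemma dot_le_norm (z : vec) : dotv z z <= n%:R * `|z| ^+ 2.
Proof.
rewrite dotvE.
have -> : n%:R * `|z| ^+ 2 = \sum_(i < n) `|z| ^+ 2.
  by rewrite sumr_const card_ord mulr_natl.
apply: ler_sum => i _.
rewrite -expr2 -real_normK ?num_real //.
apply: lerXn2r; rewrite ?nnegrE ?normr_ge0 //; exact: coord_le.
Qed.

Lemma compact_dot (S : set vec) : compact S ->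
  exists B, 0 <= B /\ forall z, S z -> dotv z z <= B.
Proof.
move=> /compact_bounded [M0 [_ HM]].
have := HM (`|M0| + 1); rewrite (le_lt_trans (ler_norm M0)) ?ltrDl // => /(_ isT) hb.
exists (n%:R * (`|M0| + 1) ^+ 2); split.
  by rewrite mulr_ge0 // sqr_ge0.
move=> z Sz; apply: le_trans (dot_le_norm z) _.
apply: ler_wpM2l => //; apply: lerXn2r; rewrite ?nnegrE ?normr_ge0 //.
  exact: hb.
Qed.

Lemma tau_bounds (Hm : 'M[R]_n) (C : R) :
  (forall v, 0 <= quadf Hm v) -> (forall v, enorm (Hm *m v) <= C * enorm v) ->
  0 <= osmm_tau Hm <= `|C|.
Proof.
move=> hpsd hC.
have hii i : 0 <= Hm i i <= `|C|.
  rewrite -diag_quad hpsd /=.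
  apply: le_trans (cs_mat _ hC) _.
  have -> : dotv (delta_mx i 0 : vec) (delta_mx i 0) = 1.
    by rewrite -enorm_sq enorm_delta expr1n.
  by rewrite mulr1 ler_norm.
have htr : 0 <= \tr Hm <= n%:R * `|C|.
  rewrite /mxtrace; apply/andP; split.
    by apply: sumr_ge0 => i _; case/andP: (hii i).
  have -> : n%:R * `|C| = \sum_(i < n) `|C| by rewrite sumr_const card_ord mulr_natl.
  by apply: ler_sum => i _; case/andP: (hii i).
rewrite /osmm_tau; have [n0|npos] := posnP n.
  have -> : n%:R = 0 :> R by rewrite n0.
  by rewrite invr0 mulr0 lexx normr_ge0.
case/andP: htr => h0 h1; apply/andP; split.
  by rewrite divr_ge0.
by rewrite ler_pdivrMr ?ltr0n // mulrC.
Qed.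

End CB.

Unset Implicit Arguments.
Section Main.
Variables (R : realType) (n : nat)
  (Omega : set 'cV[R]_n) (f : 'cV[R]_n -> R) (gf : 'cV[R]_n -> 'cV[R]_n) (L : R)
  (g : 'cV[R]_n -> \bar R)
  (M : nat) (alpha beta tau_min mu_min mu_max gdec ginc mu0 C : R)
  (x xh : nat -> 'cV[R]_n) (H : nat -> 'M[R]_n) (mu t : nat -> R) (j : nat -> nat).
Notation vec := 'cV[R]_n.
Hypotheses (hop : open Omega) (hcO : convex_set_v Omega) (hcf : convex_on Omega f)
 (hd : forall z, Omega z -> differentiable f z)
 (hg : forall z v, Omega z -> 'd f z v = dotv (gf z) v)
 (hL : forall y z, Omega y -> Omega z -> enorm (gf y - gf z) <= L * enorm (y - z))
 (hgn : forall z, g z != -oo%E) (hcg : convex_ext g)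
 (hcpt : forall a : R, compact [set z | (hfun Omega f g z <= a%:E)%E])
 (hinf : (ereal_inf (range (hfun Omega f g)) < +oo)%E)
 (ha : 0 < alpha < 1) (hb : 0 < beta < 1) (htm : 0 < tau_min)
 (hmm : 0 < mu_min) (hmM : mu_min <= mu_max) (hgd : 0 < gdec < 1) (hgi : 1 < ginc)
 (hmu0 : mu_min <= mu0 <= mu_max)
 (hH : forall k, (H k)^T = H k /\ (forall v, 0 <= quadf (H k) v) /\
             (forall v, enorm (H k *m v) <= C * enorm v))
 (hx0 : Omega (x 0%N)) (hmu0' : mu 0%N = mu0)
 (hopt : forall k z, (osmm_obj M f gf g x (osmm_mat (mu k) tau_min (H k)) k (xh k)
                 <= osmm_obj M f gf g x (osmm_mat (mu k) tau_min (H k)) k z)%E)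
 (hls : forall k, t k = beta ^+ j k /\
     osmm_accept Omega f g alpha (osmm_mat (mu k) tau_min (H k)) (x k) (xh k) (t k) /\
     (forall i, (i < j k)%N ->
        ~ osmm_accept Omega f g alpha (osmm_mat (mu k) tau_min (H k)) (x k) (xh k) (beta ^+ i)))
 (hxs : forall k, x k.+1 = x k + t k *: (xh k - x k))
 (hmus : forall k, mu k.+1 = if t k == 1 then Num.max (gdec * mu k) mu_min
                       else Num.min (ginc * mu k) mu_max).

Local Notation L1 := (`|L| + 1).
Local Notation A k := (osmm_mat (mu k) tau_min (H k)).
Local Notation lam k := (osmm_lambda (mu k) tau_min (H k)).
Local Notation hh := (hfun Omega f g).
Local Notation lmin := (mu_min * tau_min).
Local Notation lmax := (mu_max * (`|C| + tau_min)).

Lemma L1_pos : 0 < L1.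
Proof. by rewrite ltr_pwDr // normr_ge0. Qed.

Lemma hL1 y z : Omega y -> Omega z -> enorm (gf y - gf z) <= L1 * enorm (y - z).
Proof.
move=> hy hz; apply: le_trans (hL _ _ hy hz) _; apply: ler_wpM2r; first exact: enorm_ge0.
by apply: le_trans (ler_norm L) _; rewrite lerDl.
Qed.

Lemma mu_bd k : mu_min <= mu k <= mu_max.
Proof.
elim: k => [|k IH]; first by rewrite hmu0'.
case/andP: IH => h1 h2; case/andP: hgd => g0 g1.
have mk0 : 0 <= mu k by apply: le_trans (ltW hmm) h1.
rewrite hmus; case: ifP => _.
  rewrite le_max lexx orbT /= ge_max hmM andbT.
  by apply: le_trans h2; rewrite ler_piMl // ltW.
rewrite ge_min lexx orbT andbT le_min hmM andbT.
by apply: le_trans h1 _; rewrite ler_peMl // ltW.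
Qed.

Lemma lam_bd k : lmin <= lam k <= lmax.
Proof.
have [_ [hpsd hC]] := hH k.
have /andP[t0 t1] := tau_bounds hpsd hC.
have /andP[m0 m1] := mu_bd k.
rewrite /osmm_lambda; apply/andP; split.
  apply: ler_pM => //; [exact: ltW | exact: ltW | by rewrite lerDr].
apply: ler_pM => //; first by apply: le_trans (ltW hmm) m0.
  by rewrite addr_ge0 // ltW.
by rewrite lerD2r.
Qed.

Lemma q_lo k w : lmin * dotv w w <= quadf (A k) w.
Proof.
have [_ [hpsd _]] := hH k.
rewrite /osmm_mat quadf_mat.
have := hpsd w; have := dot_ge0 w; have /andP[l0 _] := lam_bd k.
nra.
Qed.

Lemma q_hi k w : quadf (A k) w <= (`|C| + lmax) * dotv w w.
Proof.
have [_ [_ hC]] := hH k.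
rewrite /osmm_mat quadf_mat.
have := cs_mat w hC; have := dot_ge0 w; have /andP[_ l1] := lam_bd k.
have := ler_norm C.
nra.
Qed.

Lemma lmin_pos : 0 < lmin.
Proof. by rewrite mulr_gt0. Qed.

Lemma q_ge0 k w : 0 <= quadf (A k) w.
Proof. by apply: le_trans (q_lo k w); rewrite mulr_ge0 ?dot_ge0 // ltW // lmin_pos. Qed.


Lemma hclosed (a : R) : closed [set z | (hh z <= a%:E)%E].
Proof. apply: compact_closed (hcpt a); exact: norm_hausdorff. Qed.

Lemma fext_nNy z : fext Omega f z != -oo%E.
Proof. by rewrite /fext; case: ifP. Qed.

Lemma hh_nNy z : hh z != -oo%E.
Proof. by rewrite /hfun adde_eq_ninfty negb_or fext_nNy hgn. Qed.

Lemma hh_fin z : Omega z -> g z != +oo%E -> hh z = (f z + fine (g z))%:E.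
Proof.
move=> hz gz; rewrite /hfun fext_in // EFinD fineK //.
by rewrite fin_numE hgn gz.
Qed.

Lemma hh_fin_inv z : hh z != +oo%E -> Omega z /\ g z != +oo%E.
Proof.
move=> hz; have hO : Omega z.
  by apply/not_notP => hno; move: hz; rewrite hfun_out // eqxx.
split => //; apply/negP => /eqP e; move: hz.
by rewrite /hfun e addey ?fext_nNy.
Qed.

Lemma exists_y0 : exists y0, Omega y0 /\ g y0 != +oo%E.
Proof.
have [_ [z _ <-] hz] := ereal_inf_lt hinf.
by exists z; apply: hh_fin_inv; rewrite -ltey.
Qed.

Lemma gxh_fin k : g (xh k) != +oo%E.
Proof.
have [y0 [hy0 gy0]] := exists_y0.
apply/negP => /eqP e; have := hopt k y0; rewrite /osmm_obj e addey // addye //.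
have fy : g y0 \is a fin_num by rewrite fin_numE hgn gy0.
by rewrite -(fineK fy) -!EFinD leye_eq.
Qed.

Lemma xh_in k : Omega (xh k).
Proof.
have [y0 [hy0 gy0]] := exists_y0.
exact: (dom_g hop hcO hd hg (ltW L1_pos) hL1 hgn hcg hclosed hy0 gy0 (gxh_fin k)).
Qed.

Lemma t_bd k : 0 < t k <= 1.
Proof.
have [-> _] := hls k; case/andP: hb => b0 b1.
by rewrite exprn_gt0 // exprn_ile1 // ltW.
Qed.

Lemma x_in k : Omega (x k).
Proof.
elim: k => [//|k IH]; rewrite hxs.
apply: seg_in => //; first by rewrite addrC subrK; exact: xh_in.
by case/andP: (t_bd k) => t0 t1; rewrite (ltW t0) t1.
Qed.

Lemma lmod_le k z : Omega z -> lmodel M f gf x k z <= f z.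
Proof.
move=> hz; rewrite /lmodel; apply: bigmax_le => [|i _]; rewrite /affmod;
  exact: (grad_ineq hcO hcf hd hg (ltW L1_pos) hL1 (x_in _) hz).
Qed.

Lemma lmod_ge k z : affmod f gf x k z <= lmodel M f gf x k z.
Proof. exact: bigmax_ge_id. Qed.

Lemma lmod_xk k : lmodel M f gf x k (x k) = f (x k).
Proof.
apply/le_anti; rewrite lmod_le /=; last exact: x_in.
have := lmod_ge k (x k); rewrite /affmod subrr.
by rewrite dotC dot0l addr0.
Qed.


Lemma fin_g z : g z != +oo%E -> g z \is a fin_num.
Proof. by move=> h; rewrite fin_numE hgn h. Qed.

Local Notation mk k := (lmodel M f gf x k (xh k) + fine (g (xh k))).
Local Notation qk k := (quadf (A k) (xh k - x k)).
Local Notation ddk k := (dotv (xh k - x k) (xh k - x k)).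
Local Notation hk k := (f (x k) + fine (g (x k))).

Lemma obj_xh k : osmm_obj M f gf g x (A k) k (xh k) = (mk k + 1 / 2 * qk k)%:E.
Proof. by rewrite /osmm_obj -(fineK (fin_g _ (gxh_fin k))) -!EFinD. Qed.

Lemma K1 k : ((mk k + 1 / 2 * qk k)%:E <= hh (x k))%E.
Proof.
have := hopt k (x k); rewrite obj_xh /osmm_obj subrr quadf0 mulr0 adde0 lmod_xk.
by rewrite /hfun fext_in //; exact: x_in.
Qed.

Lemma K1r k : g (x k) != +oo%E -> mk k + 1 / 2 * qk k <= hk k.
Proof. by move=> h; have := K1 k; rewrite (hh_fin _ (x_in k) h) lee_fin. Qed.

Lemma K2 k y s : Omega y -> g y != +oo%E -> g (x k) != +oo%E -> 0 <= s <= 1 ->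
  mk k + 1 / 2 * qk k <= s * (f y + fine (g y)) + (1 - s) * hk k
     + 1 / 2 * (s ^+ 2 * quadf (A k) (y - x k)).
Proof.
move=> hy gy gx hs.
set z := x k + s *: (y - x k).
have hz : Omega z by apply: seg_in => //; [exact: x_in | rewrite addrC subrK].
have ez : s *: y + (1 - s) *: x k = z by rewrite /z scalerBr scalerBl scale1r addrCA.
have e2 : z - x k = s *: (y - x k) by rewrite /z addrC addKr.
have := hopt k z; rewrite obj_xh /osmm_obj e2 quadfZ.
have hgz := hcg y (x k) s hs; rewrite ez in hgz.
rewrite -(fineK (fin_g _ gy)) -(fineK (fin_g _ gx)) -!EFinM -EFinD in hgz.
have hfz := hcf y (x k) s hy (x_in k) hs; rewrite ez in hfz.
have hlz := lmod_le k z hz.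
move=> h1; have := le_trans h1 (leeD (leeD (lexx _) hgz) (lexx _)).
rewrite -!EFinD lee_fin; lra.
Qed.

Lemma K3 k s : g (x k) != +oo%E -> 0 <= s <= 1 ->
  (osmm_phi Omega f g (x k) (xh k) s <=
   (hk k - s * (hk k - mk k) + L1 * (s ^+ 2 * ddk k))%:E)%E.
Proof.
move=> gx hs; case/andP: (hs) => s0 s1.
have hxd : Omega (x k + (xh k - x k)) by rewrite addrC subrK; exact: xh_in.
have hp := seg_in hcO (x_in k) hxd hs.
rewrite /osmm_phi fext_in // -(fineK (fin_g _ gx)) -(fineK (fin_g _ (gxh_fin k))).
rewrite -!EFinM -!EFinD lee_fin.
have := taylor_bd hcO hd hg (ltW L1_pos) hL1 (x_in k) hp.
rewrite dotZr dotZl dotZr ler_norml => /andP[_ hup].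
have hdot := lmod_ge k (xh k); rewrite /affmod in hdot.
have := ler_wpM2l s0 hdot.
rewrite expr2; lra.
Qed.

Lemma accept_ok k s : g (x k) != +oo%E -> 0 < s <= 1 ->
  L1 * s <= (1 - alpha) * lmin / 2 ->
  osmm_accept Omega f g alpha (A k) (x k) (xh k) s.
Proof.
move=> gx /andP[s0 s1] hs; rewrite /osmm_accept.
apply: le_trans (K3 k s gx _) _; first by rewrite (ltW s0) s1.
rewrite (hh_fin _ (x_in k) gx) -EFinB lee_fin.
have hK1 := K1r k gx.
have hq := q_lo k (xh k - x k).
have hdd := dot_ge0 (xh k - x k).
case/andP: ha => a0 a1.
have h1 : s * (1 / 2 * qk k) <= s * (hk k - mk k) by apply: ler_wpM2l; [exact: ltW | lra].
have h2 : (L1 * s) * (s * ddk k) <= ((1 - alpha) * lmin / 2) * (s * ddk k).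
  by apply: ler_wpM2r => //; rewrite mulr_ge0 // ltW.
have h3 : ((1 - alpha) / 2 * s) * (lmin * ddk k) <= ((1 - alpha) / 2 * s) * qk k.
  by apply: ler_wpM2l => //; rewrite mulr_ge0 // ?divr_ge0 ?subr_ge0 ?ltW.
rewrite expr2; lra.
Qed.

Lemma K4 k : (hh (x k.+1) <= osmm_phi Omega f g (x k) (xh k) (t k))%E.
Proof.
rewrite /hfun /osmm_phi hxs -addeA; apply: leeD2l.
have ht : 0 <= t k <= 1 by case/andP: (t_bd k) => t0 t1; rewrite (ltW t0) t1.
have := hcg (xh k) (x k) (t k) ht.
have -> : t k *: xh k + (1 - t k) *: x k = x k + t k *: (xh k - x k).
  by rewrite scalerBr scalerBl scale1r addrCA.
by [].
Qed.

Lemma le_fin_neq (a : \bar R) (r : R) : (a <= r%:E)%E -> a != +oo%E.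
Proof. by move=> h; rewrite -ltey (le_lt_trans h) // ltry. Qed.

Lemma fin_next k : hh (x k.+1) != +oo%E.
Proof.
have [ht [hacc hrej]] := hls k.
case: (eqVneq (hh (x k)) +oo%E) => [e|ne].
  case: (posnP (j k)) => [j0|jpos].
    have e1 : x k.+1 = xh k by rewrite hxs ht j0 expr0 scale1r addrC subrK.
    by rewrite e1 (hh_fin _ (xh_in k) (gxh_fin k)).
  exfalso; apply: (hrej 0%N jpos); rewrite /osmm_accept e expr0.
  by rewrite -EFinN addye // leey.
have [hO gx] := hh_fin_inv _ ne.
apply: (@le_fin_neq _ (hk k - alpha * t k / 2 * qk k)).
apply: le_trans (K4 k) _; apply: le_trans hacc _.
by rewrite (hh_fin _ hO gx) -EFinB.
Qed.

Lemma noninc k : (hh (x k.+1) <= hh (x k))%E.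
Proof.
case: (eqVneq (hh (x k)) +oo%E) => [->|ne]; first exact: leey.
have [hO gx] := hh_fin_inv _ ne.
have [_ [hacc _]] := hls k.
apply: le_trans (K4 k) _; apply: le_trans hacc _.
rewrite (hh_fin _ hO gx) -EFinB lee_fin gerBl.
have := q_ge0 k (xh k - x k); case/andP: (t_bd k) => t0 _; case/andP: ha => a0 _.
move=> hq; rewrite mulr_ge0 // divr_ge0 // mulr_ge0 // ltW //.
Qed.


Local Notation c0 := ((1 - alpha) * lmin / (2 * L1)).
Local Notation tmin := (beta * Num.min 1 c0).

Lemma c0_pos : 0 < c0.
Proof.
case/andP: ha => a0 a1.
by rewrite divr_gt0 ?mulr_gt0 ?subr_gt0 ?lmin_pos ?L1_pos.
Qed.

Lemma tmin_pos : 0 < tmin.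
Proof. by case/andP: hb => b0 _; rewrite mulr_gt0 // lt_min ltr01 c0_pos. Qed.

Lemma t_lo k : g (x k) != +oo%E -> tmin <= t k.
Proof.
move=> gx; have [ht [_ hrej]] := hls k; case/andP: hb => b0 b1.
case: (posnP (j k)) => [j0|jpos].
  rewrite ht j0 expr0; have hm : Num.min 1 c0 <= 1 by rewrite ge_min lexx.
  apply: le_trans (ler_wpM2l (ltW b0) hm) _.
  by rewrite mulr1 ltW.
have ej := prednK jpos.
set i := (j k).-1 in ej.
have hi : (i < j k)%N by rewrite -ej.
have hbi : c0 < beta ^+ i.
  rewrite ltNge; apply/negP => hle; apply: (hrej i hi).
  apply: accept_ok => //.
    by rewrite exprn_gt0 // exprn_ile1 // ltW.
  have := ler_wpM2l (ltW L1_pos) hle.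
  have -> : L1 * c0 = (1 - alpha) * lmin / 2.
    by field; rewrite gt_eqF ?L1_pos.
  by [].
rewrite ht -ej exprS; apply: ler_wpM2l; first exact: ltW.
by apply: le_trans (ltW hbi); rewrite ge_min lexx orbT.
Qed.

Lemma comb (h' h0 tt D q dd lm L1' al : R) :
  0 < lm -> 0 < L1' -> 0 < al -> 0 <= tt <= 1 -> 0 <= dd -> lm * dd <= q ->
  h' <= h0 - al * tt / 2 * q -> h' <= h0 - tt * D + L1' * (tt ^+ 2 * dd) ->
  h' <= h0 - al * lm / (al * lm + 2 * L1') * tt * D.
Proof.
move=> lm0 L0 al0 /andP[t0 t1] dd0 hq e1 e2.
have W0 : 0 < al * lm + 2 * L1' by rewrite addr_gt0 ?mulr_gt0.
have f1 := ler_wpM2l (ltW (mulr_gt0 al0 lm0)) e2.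
have f2 := ler_wpM2l (ltW (mulr_gt0 (ltr0Sn _ 1) L0)) e1.
have f3 : lm * (tt * dd) <= q.
  apply: le_trans hq; apply: ler_wpM2l; first exact: ltW.
  by rewrite ler_piMl.
have f4 := ler_wpM2l (mulr_ge0 (mulr_ge0 (ltW al0) (ltW L0)) t0) f3.
rewrite -(ler_pM2l W0).
have -> : (al * lm + 2 * L1') * (h0 - al * lm / (al * lm + 2 * L1') * tt * D) =
   (al * lm + 2 * L1') * h0 - al * lm * tt * D.
  by field; rewrite gt_eqF.
rewrite expr2 in f1; lra.
Qed.

Local Notation kap := (alpha * lmin / (alpha * lmin + 2 * L1)).

Lemma kap_pos : 0 < kap.
Proof.
case/andP: ha => a0 _.
have h1 : 0 < alpha * lmin by rewrite mulr_gt0 // lmin_pos.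
have h2 : 0 < 2 * L1 by rewrite mulr_gt0 // L1_pos.
by rewrite divr_gt0 // addr_gt0.
Qed.

Lemma decrease k : g (x k) != +oo%E ->
  fine (hh (x k.+1)) <= hk k - kap * tmin * (hk k - mk k).
Proof.
move=> gx.
have [hO1 gx1] := hh_fin_inv _ (fin_next k).
rewrite (hh_fin _ hO1 gx1) /=.
set r' := f (x k.+1) + fine (g (x k.+1)).
have e' := hh_fin _ hO1 gx1; rewrite -/r' in e'.
have [_ [hacc _]] := hls k.
have ht : 0 <= t k <= 1 by case/andP: (t_bd k) => t0 t1; rewrite (ltW t0) t1.
have i1 : r' <= hk k - alpha * t k / 2 * qk k.
  have := le_trans (K4 k) hacc; rewrite e' (hh_fin _ (x_in k) gx) -EFinB lee_fin //.
have i2 : r' <= hk k - t k * (hk k - mk k) + L1 * (t k ^+ 2 * ddk k).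
  by have := le_trans (K4 k) (K3 k (t k) gx ht); rewrite e' lee_fin.
have := comb _ _ _ _ _ _ _ _ _ lmin_pos L1_pos (andP ha).1 ht (dot_ge0 _) (q_lo k _) i1 i2.
move=> h; apply: le_trans h _; rewrite lerD2l lerN2.
have hD : 0 <= hk k - mk k.
  have := K1r k gx; have := q_ge0 k (xh k - x k); lra.
apply: ler_wpM2r; first exact: hD.
apply: ler_wpM2l; first exact: (ltW kap_pos).
exact: t_lo.
Qed.


Lemma dd_sub (y z : vec) : dotv (y - z) (y - z) <= 2 * dotv y y + 2 * dotv z z.
Proof.
have e : y - z = 1 *: y + (-1) *: z by rewrite scale1r scaleN1r.
have := dot_ge0 (1 *: y + 1 *: z); rewrite e !dot_quad; nra.
Qed.

Lemma core y eps : Omega y -> g y != +oo%E -> 0 < eps ->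
  exists k, (hh (x k) <= (f y + fine (g y) + eps)%:E)%E.
Proof.
move=> hy gy e0; apply: contrapT => hno.
have hgt k : ((f y + fine (g y) + eps)%:E < hh (x k))%E.
  by rewrite ltNge; apply/negP => h; apply: hno; exists k.
set hyv := f y + fine (g y) in hgt.
pose r k := fine (hh (x k.+1)).
have hfin k : Omega (x k.+1) /\ g (x k.+1) != +oo%E := hh_fin_inv _ (fin_next k).
have er k : r k = hk k.+1.
  by case: (hfin k) => h1 h2; rewrite /r (hh_fin _ h1 h2).
have eE k : hh (x k.+1) = (r k)%:E.
  by case: (hfin k) => h1 h2; rewrite er (hh_fin _ h1 h2).
have hr_gt k : hyv + eps < r k by have := hgt k.+1; rewrite eE lte_fin.
have chain k : (hh (x k.+1) <= hh (x 1%N))%E.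
  elim: k => [|k IH]; first exact: lexx.
  exact: le_trans (noninc _) IH.
have [B [B0 hB]] := compact_dot (hcpt (r 0%N)).
have hxB k : dotv (x k.+1) (x k.+1) <= B.
  by apply: hB; rewrite /= -eE; exact: chain.
have lmx0 : 0 <= `|C| + lmax.
  have /andP[l1 l2] := lam_bd 0%N.
  by rewrite addr_ge0 // (le_trans _ (le_trans l1 l2)) // ltW // lmin_pos.
set Q := (`|C| + lmax) * (2 * dotv y y + 2 * B).
have Qb k : quadf (A k.+1) (y - x k.+1) <= Q.
  apply: le_trans (q_hi _ _) _; apply: ler_wpM2l => //.
  apply: le_trans (dd_sub _ _) _; rewrite lerD2l; apply: ler_wpM2l => //.
have Q0 : 0 <= Q by rewrite mulr_ge0 // addr_ge0 // mulr_ge0 // dot_ge0.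
set s := Num.min 1 (eps / (Q + 1)).
have Q1 : 0 < Q + 1 by rewrite ltr_pwDr.
have s0 : 0 < s by rewrite /s lt_min ltr01 divr_gt0.
have s1 : s <= 1 by rewrite /s ge_min lexx.
have sQ : s * Q <= eps.
  have : s <= eps / (Q + 1) by rewrite /s ge_min lexx orbT.
  rewrite ler_pdivlMr // => h; apply: le_trans h; rewrite ler_wpM2l ?lerDl //.
  exact: ltW.
have Db k : s * eps / 2 <= hk k.+1 - mk k.+1.
  have hs : 0 <= s <= 1 by rewrite (ltW s0) s1.
  have := K2 k.+1 y s hy gy (hfin k).2 hs.
  have hq := q_ge0 k.+1 (xh k.+1 - x k.+1).
  have a1 := ler_wpM2l (ltW s0) (ltW (hr_gt k)).
  have a2 := ler_wpM2l (sqr_ge0 s) (Qb k).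
  have a3 := ler_wpM2l (ltW s0) sQ.
  rewrite er in a1; rewrite -/hyv; rewrite !expr2 in a2 *; lra.
set del := kap * tmin * (s * eps / 2).
have del0 : 0 < del.
  apply: mulr_gt0; first by apply: mulr_gt0; [exact: kap_pos | exact: tmin_pos].
  by apply: divr_gt0 => //; apply: mulr_gt0.
have step k : r k.+1 <= r k - del.
  have := decrease k.+1 (hfin k).2; rewrite -/(r k.+1) -er => h.
  apply: le_trans h _; rewrite lerD2l lerN2 /del.
  apply: ler_wpM2l; last by rewrite er; exact: Db.
  by apply: mulr_ge0; apply: ltW; [exact: kap_pos | exact: tmin_pos].
have iter N : r N <= r 0%N - N%:R * del.
  elim: N => [|N IH]; first by rewrite mul0r subr0.
  have := step N; rewrite -addn1 natrD mulrDl mul1r; lra.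
have [N hN] : exists N : nat, (r 0%N - hyv) / del < N%:R.
  by eexists; exact: truncnS_gt.
rewrite ltr_pdivrMr // in hN.
have := iter N; have := hr_gt N; lra.
Qed.

Lemma conv : (fun k => hh (x k)) @ \oo --> ereal_inf (range hh).
Proof.
have ni : nonincreasing_seq (fun k => hh (x k)).
  by apply/nonincreasing_seqP => k; exact: noninc k.
have := ereal_nonincreasing_cvgn ni.
suff -> : ereal_inf ((fun k => hh (x k)) @` setT) = ereal_inf (range hh) by [].
apply/le_anti/andP; split.
  apply: le_ereal_inf_tmp => _ [z _ <-].
  case: (eqVneq (hh z) +oo%E) => [->|ne]; first exact: leey.
  have [hz gz] := hh_fin_inv _ ne.
  rewrite (hh_fin _ hz gz); apply/lee_addgt0Pr => e e0.
  have [k hk'] := core z e hz gz e0.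
  rewrite -EFinD; apply: le_trans hk'.
  by apply: ereal_inf_lbound; exists k.
apply: ereal_inf_le_tmp => _ [k _ <-]; by exists (x k).
Qed.

End Main.

Theorem mainTheorem3 (R : realType) (n : nat)
  (Omega : set 'cV[R]_n) (f : 'cV[R]_n -> R) (gf : 'cV[R]_n -> 'cV[R]_n) (L : R)
  (g : 'cV[R]_n -> \bar R)
  (M : nat) (alpha beta tau_min mu_min mu_max gdec ginc mu0 C : R)
  (x xh : nat -> 'cV[R]_n) (H : nat -> 'M[R]_n) (mu t : nat -> R) (j : nat -> nat) :
  (* assumptions on Omega, f, g, h *)
  open Omega -> convex_set_v Omega -> convex_on Omega f ->
  (forall z, Omega z -> differentiable f z) ->
  (forall z v, Omega z -> 'd f z v = dotv (gf z) v) ->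
  (forall y z, Omega y -> Omega z -> enorm (gf y - gf z) <= L * enorm (y - z)) ->
  (forall z, g z != -oo%E) -> convex_ext g ->
  (forall a : R, closed [set z | (g z <= a%:E)%E]) ->
  (forall a : R, compact [set z | (hfun Omega f g z <= a%:E)%E]) ->
  (ereal_inf (range (hfun Omega f g)) < +oo)%E ->
  (* parameters *)
  (1 <= M)%N -> 0 < alpha < 1 -> 0 < beta < 1 -> 0 < tau_min ->
  0 < mu_min -> mu_min <= mu_max -> 0 < gdec < 1 -> 1 < ginc ->
  mu_min <= mu0 <= mu_max ->
  mu_max * tau_min > 2 * L / (1 - alpha) ->
  (* the matrices H_k *)
  (forall k, (H k)^T = H k /\ (forall v, 0 <= quadf (H k) v) /\
             (forall v, enorm (H k *m v) <= C * enorm v)) ->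
  (* the run of the method *)
  Omega (x 0%N) -> mu 0%N = mu0 ->
  (forall k z, (osmm_obj M f gf g x (osmm_mat (mu k) tau_min (H k)) k (xh k)
                 <= osmm_obj M f gf g x (osmm_mat (mu k) tau_min (H k)) k z)%E) ->
  (forall k, t k = beta ^+ j k /\
     osmm_accept Omega f g alpha (osmm_mat (mu k) tau_min (H k)) (x k) (xh k) (t k) /\
     (forall i, (i < j k)%N ->
        ~ osmm_accept Omega f g alpha (osmm_mat (mu k) tau_min (H k)) (x k) (xh k) (beta ^+ i))) ->
  (forall k, x k.+1 = x k + t k *: (xh k - x k)) ->
  (forall k, mu k.+1 = if t k == 1 then Num.max (gdec * mu k) mu_min
                       else Num.min (ginc * mu k) mu_max) ->
  (fun k => hfun Omega f g (x k)) @ \oo --> ereal_inf (range (hfun Omega f g)).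
Proof.
move=> hop hcO hcf hd hg hL hgn hcg hgcl hcpt hinf hM ha hb htm hmm hmM hgd hgi hmu0 hpar hH hx0 hmu0' hopt hls hxs hmus.
by apply: (conv R n Omega f gf L g M alpha beta tau_min mu_min mu_max gdec ginc mu0 C x xh H mu t j).
Qed.
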